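(* Let $X$ be a toric Fano cone singularity given by a full-dimensional simplicial cone $\sigma\subset N_\mathbb{R}$ with primitive ray generators $v_1,\dots,v_n$ (an $\mathbb{R}$-basis of $N_\mathbb{R}$), and let $\xi$ be in the interior of $\sigma$. Then $(X,\xi)$ is K-stable if and only if $\xi$ is a positive multiple of $v_1+\dots+v_n$. In particular every toric Sasaki-Einstein structure on a rational homology sphere is quasi-regular.
   Context: For a toric cone singularity, K-stability of the polarised pair $(X,\xi)$ is equivalent to the condition that $\hat\xi=\xi/\langle u^*,\xi\rangle$ is a critical point of the volume function $w\mapsto\mathrm{Vol}(\sigma^\vee(w))$ restricted to the affine hyperplane $\{w:\langle u^*,w\rangle=1\}$, where $\sigma^\vee(w)=\{u\in\sigma^\vee:\langle u,w\rangle\le1\}$ and the canonical weight $u^*\in M_\mathbb{R}$ is defined by $\langle u^*,v_\rho\rangle=1$ for all primitive ray generators $v_\rho$ of $\sigma$. A Sasakian structure (with Reeb field $\xi$) is quasi-regular if $\xi$ is a positive real multiple of an element of $N_\mathbb{Q}$. *)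

(* Defs.v *)
From Stdlib Require Import Reals Lra Lia ZArith QArith Qreals List Classical ClassicalEpsilon.
Open Scope R_scope.

(* Vectors of N_R = M_R = R^n are functions nat -> R; only coordinates j < n matter.
   The lattice N = M = Z^n. *)

Fixpoint rsum (n : nat) (f : nat -> R) : R :=
  match n with
  | O => 0
  | S k => rsum k f + f k
  end.

Definition dot (n : nat) (u w : nat -> R) : R := rsum n (fun j => u j * w j).

Definition zvec (z : nat -> Z) : nat -> R := fun j => IZR (z j).

Definition primitive_vec (n : nat) (z : nat -> Z) : Prop :=
  forall d : Z, (forall j, (j < n)%nat -> (d | z j)%Z) -> Z.abs d = 1%Z.

Definition lin_indep (n : nat) (v : nat -> nat -> Z) : Prop :=
  forall c : nat -> R,
    (forall j, (j < n)%nat -> rsum n (fun i => c i * IZR (v i j)) = 0) ->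
    forall i, (i < n)%nat -> c i = 0.

Definition in_sigma (n : nat) (v : nat -> nat -> Z) (y : nat -> R) : Prop :=
  exists a : nat -> R, (forall i, (i < n)%nat -> 0 <= a i) /\
    forall j, (j < n)%nat -> y j = rsum n (fun i => a i * IZR (v i j)).

Definition in_interior_sigma (n : nat) (v : nat -> nat -> Z) (xi : nat -> R) : Prop :=
  exists eps, 0 < eps /\
    forall y : nat -> R, (forall j, (j < n)%nat -> Rabs (y j - xi j) < eps) ->
      in_sigma n v y.

Definition in_dual (n : nat) (v : nat -> nat -> Z) (u : nat -> R) : Prop :=
  forall y, in_sigma n v y -> 0 <= dot n u y.

Definition dual_trunc (n : nat) (v : nat -> nat -> Z) (w : nat -> R) (u : nat -> R) : Prop :=
  in_dual n v u /\ dot n u w <= 1.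

(* Volume (Jordan content) of K in R^n, w.r.t. the lattice Z^n:
   V = lim_{m -> oo} #{ z in Z^n : z/m in K } / m^n. *)
Definition lattice_pt (n : nat) (z : list Z) (m : nat) : nat -> R :=
  fun j => IZR (nth j z 0%Z) / INR m.

Definition has_volume (n : nat) (K : (nat -> R) -> Prop) (V : R) : Prop :=
  forall eps, 0 < eps -> exists M : nat, forall m : nat, (M <= m)%nat -> (1 <= m)%nat ->
    exists L : list (list Z), NoDup L /\
      (forall z, In z L <-> (length z = n /\ K (lattice_pt n z m))) /\
      Rabs (INR (length L) / (INR m ^ n) - V) < eps.

(* Vol(K): the volume if it exists (unique), else an arbitrary value *)
Definition Vol (n : nat) (K : (nat -> R) -> Prop) : R :=
  epsilon (inhabits 0) (has_volume n K).

Definition volfun (n : nat) (v : nat -> nat -> Z) (w : nat -> R) : R :=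
  Vol n (dual_trunc n v w).

Definition canonical_weight (n : nat) (v : nat -> nat -> Z) (ustar : nat -> R) : Prop :=
  forall i, (i < n)%nat -> dot n ustar (zvec (v i)) = 1.

Definition critical_on_hyperplane (n : nat) (f : (nat -> R) -> R) (ustar w0 : nat -> R) : Prop :=
  dot n ustar w0 = 1 /\
  forall h : nat -> R, dot n ustar h = 0 ->
    derivable_pt_lim (fun t => f (fun j => w0 j + t * h j)) 0 0.

(* K-stability of (X_sigma, xi) for the toric cone singularity (via the
   volume-minimisation characterisation given in the paper) *)
Definition Kstable (n : nat) (v : nat -> nat -> Z) (xi : nat -> R) : Prop :=
  exists ustar, canonical_weight n v ustar /\
    critical_on_hyperplane n (volfun n v) ustar
      (fun j => xi j / dot n ustar xi).

Definition quasi_regular (n : nat) (xi : nat -> R) : Prop :=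
  exists c : R, 0 < c /\ exists q : nat -> Q, forall j, (j < n)%nat -> xi j = c * Q2R (q j).

(* Main.v *)
Require Import Defs.
From Stdlib Require Import Reals ZArith QArith Qreals Lra Lia List ClassicalEpsilon.
From mathcomp Require ssreflect ssrfun ssrbool eqtype ssrnat seq fintype bigop ssralg matrix Rstruct perm.
Open Scope R_scope.

Module LA.
Import ssreflect ssrfun ssrbool eqtype ssrnat seq fintype bigop ssralg matrix Rstruct perm.
Import GRing.Theory.
Local Open Scope ring_scope.
Lemma rsum_big (n : nat) (f : nat -> R) : rsum n f = \sum_(i < n) f i.
Proof. elim: n => [|n IH] /=; first by rewrite big_ord0.
by rewrite big_ord_recr /= IH. Qed.

Definition Am (n : nat) (v : nat -> nat -> Z) : 'M[R]_n := \matrix_(i, j) IZR (v i j).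

Definition cfo (n : nat) (c : 'I_n -> R) (i : nat) : R :=
  match (insub i : option (ordinal n)) with Some k => c k | None => 0 end.

Arguments cfo {n}.
Lemma cfoE n c (i : 'I_n) : cfo c i = c i.
Proof. rewrite /cfo (insubT (fun k => (k < n)%N) (ltn_ord i)) /=. congr c. by apply: val_inj. Qed.

Lemma detA_neq0 n v : lin_indep n v -> \det (Am n v) != 0.
Proof.
move=> Hli; apply/negP => /det0P [c cn0 cA]; move/negP: cn0; apply; apply/eqP/matrixP => a i.
rewrite mxE (ord1 a).
have := Hli (cfo (fun k => c ord0 k)) _ i (ltP (ltn_ord i)).
rewrite cfoE; apply => j /ltP Hj.
rewrite rsum_big.
transitivity ((c *m Am n v) ord0 (Ordinal Hj)); last by rewrite cA mxE.
rewrite mxE; apply: eq_bigr => k _; by rewrite cfoE mxE.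
Qed.

Arguments detA_neq0 {n v}.
Lemma unitA n v : lin_indep n v -> Am n v \in unitmx.
Proof. move=> H; by rewrite unitmxE unitfE detA_neq0. Qed.


Definition ent n (M : 'M[R]_n) (i j : nat) : R := cfo (fun a => cfo (fun b => M a b) j) i.
Arguments ent {n}.
Lemma entE n (M : 'M[R]_n) (a b : 'I_n) : ent M a b = M a b.
Proof. by rewrite /ent cfoE cfoE. Qed.

Definition Binv n v := ent (invmx (Am n v)).

Arguments unitA {n v}.
Lemma LA1 n v : lin_indep n v -> forall (w : nat -> R) j, (j < n)%coq_nat ->
  w j = rsum n (fun i => rsum n (fun j' => w j' * Binv n v j' i) * IZR (v i j)).
Proof.
move=> Hli w j /ltP Hj.
have HU := unitA Hli.
set wr : 'rV[R]_n := \row_k w k.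
have E : wr *m invmx (Am n v) *m Am n v = wr by rewrite mulmxKV.
transitivity (wr ord0 (Ordinal Hj)); first by rewrite mxE.
rewrite -E mxE rsum_big; apply: eq_bigr => i _.
rewrite [in RHS]rsum_big !mxE.
apply: (congr2 (fun a b => a * b)); last by [].
apply eq_bigr => k _; by rewrite /wr !mxE /Binv entE.

Qed.

Lemma LA2 n v : lin_indep n v -> exists u : nat -> R, forall i, (i < n)%coq_nat -> dot n u (zvec (v i)) = 1%R.
Proof.
move=> Hli; have HU := unitA Hli.
exists (fun j => rsum n (fun k => Binv n v j k)) => i /ltP Hi.
have E : Am n v *m invmx (Am n v) = 1%:M by rewrite mulmxV.
transitivity (\sum_(k < n) (Am n v *m invmx (Am n v)) (Ordinal Hi) k); last first.
  rewrite E (bigD1 (Ordinal Hi)) //= mxE eqxx /= big1 ?addr0 // => k Hk.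
  by rewrite mxE eq_sym (negbTE Hk).
rewrite /dot rsum_big.
under eq_bigr => j _ do rewrite rsum_big big_distrl /=.
rewrite exchange_big /=; apply: eq_bigr => k _; rewrite mxE; apply: eq_bigr => j _.
by rewrite /Binv entE /zvec mxE mulrC.
Qed.

Lemma LA3 n v : lin_indep n v -> forall z : nat -> R,
  (forall i, (i < n)%coq_nat -> rsum n (fun j => z j * IZR (v i j)) = 0%R) ->
  forall j, (j < n)%coq_nat -> z j = 0%R.
Proof.
move=> Hli z Hz j /ltP Hj; have HU := unitA Hli.
set zc : 'cV[R]_n := \col_k z k.
have E0 : Am n v *m zc = 0.
  apply/matrixP => i a; rewrite (ord1 a) [RHS]mxE.
  transitivity (rsum n (fun j => z j * IZR (v i j))); last exact: (Hz i (ltP (ltn_ord i))).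
  rewrite rsum_big mxE; apply eq_bigr => k _; by rewrite !mxE mulrC.
have : zc = 0 by rewrite -(mulKmx HU zc) E0 mulmx0.
move/matrixP => /(_ (Ordinal Hj) ord0); by rewrite !mxE.
Qed.


Definition isZ (x : R) : Prop := exists z : Z, x = IZR z.
Lemma isZ0 : isZ 0. Proof. by exists 0%Z. Qed.
Lemma isZ1 : isZ 1. Proof. by exists 1%Z. Qed.
Lemma isZN1 : isZ (-1). Proof. by exists (-1)%Z. Qed.
Lemma isZD x y : isZ x -> isZ y -> isZ (x + y).
Proof. move=> [a ->] [b ->]; exists (a + b)%Z; by rewrite plus_IZR. Qed.
Lemma isZM x y : isZ x -> isZ y -> isZ (x * y).
Proof. move=> [a ->] [b ->]; exists (a * b)%Z; by rewrite mult_IZR. Qed.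
Lemma isZX x k : isZ x -> isZ (x ^+ k).
Proof. move=> Hx; elim: k => [|k IH]; first by rewrite expr0; exact: isZ1.
by rewrite exprS; apply: isZM. Qed.
Lemma isZ_det n (M : 'M[R]_n) : (forall i j, isZ (M i j)) -> isZ (\det M).
Proof.
move=> HM; rewrite /determinant; apply: (big_ind isZ) => //; first exact: isZ0.
  exact: isZD.
move=> s _; apply: isZM; first by apply: isZX; exact: isZN1.
apply: (big_ind isZ) => //; first exact: isZ1. exact: isZM.
Qed.
Lemma isZ_adj n (M : 'M[R]_n) : (forall i j, isZ (M i j)) -> forall i j, isZ (\adj M i j).
Proof.
move=> HM i j; rewrite mxE /cofactor; apply: isZM; first by apply: isZX; exact: isZN1.
apply: isZ_det => a b; rewrite !mxE; exact: HM.
Qed.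

Definition zint (x : R) : Z := epsilon (inhabits 0%Z) (fun z => x = IZR z).
Lemma zintE x : isZ x -> IZR (zint x) = x.
Proof. move=> H; rewrite /zint; symmetry; exact: (epsilon_spec (inhabits 0%Z) (fun z => x = IZR z) H). Qed.

Lemma LA4 n v : lin_indep n v -> exists D : Z, (0 < D)%Z /\ forall i, (i < n)%coq_nat ->
  exists z : nat -> Z, forall i', (i' < n)%coq_nat ->
    rsum n (fun j => IZR (z j) * IZR (v i' j)) = (if Nat.eqb i i' then IZR D else 0%R).
Proof.
move=> Hli; have Hd := detA_neq0 Hli.
have HZ : forall i j, isZ (Am n v i j) by move=> i j; rewrite mxE; by exists (v i j).
have [d0 Ed0] := @isZ_det n _ HZ.
have d0n0 : d0 <> 0%Z by move=> E; move: Hd; rewrite Ed0 E eqxx.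
exists (d0 * d0)%Z; split; first lia.
move=> i /ltP Hi.
exists (fun j => d0 * zint (ent (\adj (Am n v)) j i))%Z => i' /ltP Hi'.
have E : Am n v *m \adj (Am n v) = (\det (Am n v))%:M by rewrite mul_mx_adj.
have := congr1 (fun M : 'M[R]_n => M (Ordinal Hi') (Ordinal Hi)) E.
rewrite !mxE /= => E2.
transitivity (IZR d0 * (\sum_j Am n v (Ordinal Hi') j * \adj (Am n v) j (Ordinal Hi))).
  rewrite rsum_big big_distrr; apply eq_bigr => k _.
  rewrite mult_IZR -/(nat_of_ord (Ordinal Hi)) entE zintE; last exact: (@isZ_adj n _ HZ).
  rewrite !mxE /=. rewrite -mulrA; congr (_ * _); by rewrite mulrC.
rewrite E2 -Ed0.
case: (PeanoNat.Nat.eqb_spec i i') => [Eii|Hne].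
  have -> : (Ordinal Hi' == Ordinal Hi) = true by apply/eqP/val_inj; rewrite /= Eii.
  by rewrite mult_IZR /= mulr1n Ed0.
have -> : (Ordinal Hi' == Ordinal Hi) = false.
  by apply/negbTE/negP => /eqP [] Heq; apply: Hne.
by rewrite mulr0n mulr0.
Qed.

End LA.

Lemma LA3' n v : lin_indep n v -> forall z : nat -> R,
  (forall i, (i < n)%nat -> rsum n (fun j => z j * IZR (v i j)) = 0) -> forall j, (j < n)%nat -> z j = 0.
Proof. exact (LA.LA3 n v). Qed.
Lemma LA2' n v : lin_indep n v -> exists u : nat -> R, forall i, (i < n)%nat -> dot n u (zvec (v i)) = 1.
Proof. exact (LA.LA2 n v). Qed.
Lemma LA4' n v : lin_indep n v -> exists D : Z, (0 < D)%Z /\ forall i, (i < n)%nat ->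
  exists z : nat -> Z, forall i', (i' < n)%nat ->
    rsum n (fun j => IZR (z j) * IZR (v i' j)) = (if Nat.eqb i i' then IZR D else 0).
Proof. exact (LA.LA4 n v). Qed.

Lemma rsum_ext n f g : (forall i, (i < n)%nat -> f i = g i) -> rsum n f = rsum n g.
Proof. induction n; intros H; simpl; auto. rewrite IHn by (intros; apply H; lia). rewrite H by lia. auto. Qed.
Lemma rsum_plus n f g : rsum n (fun i => f i + g i) = rsum n f + rsum n g.
Proof. induction n; simpl; [lra|]. rewrite IHn; lra. Qed.
Lemma rsum_scal n c f : rsum n (fun i => c * f i) = c * rsum n f.
Proof. induction n; simpl; [lra|]. rewrite IHn; lra. Qed.
Lemma rsum_opp n f : rsum n (fun i => - f i) = - rsum n f.
Proof. induction n; simpl; [lra|]. rewrite IHn; lra. Qed.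
Lemma rsum_swap n m (f : nat -> nat -> R) :
  rsum n (fun i => rsum m (fun j => f i j)) = rsum m (fun j => rsum n (fun i => f i j)).
Proof. induction n; simpl. { induction m; simpl; lra. }
rewrite IHn, <- rsum_plus. auto. Qed.
Lemma rsum_nonneg n f : (forall i, (i < n)%nat -> 0 <= f i) -> 0 <= rsum n f.
Proof. induction n; intros H; simpl; [lra|]. assert (0 <= f n) by (apply H; lia).
assert (0 <= rsum n f) by (apply IHn; intros; apply H; lia). lra. Qed.
Lemma rsum_le n f g : (forall i, (i < n)%nat -> f i <= g i) -> rsum n f <= rsum n g.
Proof. induction n; intros H; simpl; [lra|]. assert (f n <= g n) by (apply H; lia).
assert (rsum n f <= rsum n g) by (apply IHn; intros; apply H; lia). lra. Qed.
Lemma rsum_0 n : rsum n (fun _ => 0) = 0.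
Proof. induction n; simpl; [lra|]. rewrite IHn; lra. Qed.
Lemma rsum_delta n i f : (i < n)%nat -> rsum n (fun k => (if Nat.eqb k i then 1 else 0) * f k) = f i.
Proof. induction n; intros H; [lia|]. simpl.
destruct (Nat.eqb_spec n i).
- subst. rewrite (rsum_ext _ _ (fun _ => 0)). rewrite rsum_0; lra.
  intros k Hk. destruct (Nat.eqb_spec k i); [lia|lra].
- rewrite IHn by lia. lra. Qed.
Lemma rsum_delta' n i f : (i < n)%nat -> rsum n (fun k => (if Nat.eqb i k then 1 else 0) * f k) = f i.
Proof. intros H. rewrite <- (rsum_delta n i f H). apply rsum_ext. intros k _.
rewrite Nat.eqb_sym. auto. Qed.
Lemma rsum_shift n f : rsum (S n) f = f 0%nat + rsum n (fun i => f (S i)).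
Proof. induction n; simpl in *; [lra|]. rewrite IHn. lra. Qed.
Lemma rsum_term n f j : (j < n)%nat -> (forall i, (i < n)%nat -> 0 <= f i) -> f j <= rsum n f.
Proof. induction n; intros Hj H; [lia|]. simpl.
destruct (Nat.eq_dec j n). subst. assert (0 <= rsum n f) by (apply rsum_nonneg; intros; apply H; lia). lra.
assert (f j <= rsum n f) by (apply IHn; [lia|intros; apply H; lia]). assert (0 <= f n) by (apply H; lia). lra. Qed.

Fixpoint rprod (n : nat) (f : nat -> R) : R :=
  match n with O => 1 | S k => rprod k f * f k end.
Lemma rprod_ext n f g : (forall i, (i < n)%nat -> f i = g i) -> rprod n f = rprod n g.
Proof. induction n; intros H; simpl; auto. rewrite IHn by (intros; apply H; lia). rewrite H by lia. auto. Qed.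
Lemma rprod_pos n f : (forall i, (i < n)%nat -> 0 < f i) -> 0 < rprod n f.
Proof. induction n; intros H; simpl; [lra|]. apply Rmult_lt_0_compat. apply IHn; intros; apply H; lia. apply H; lia. Qed.
Lemma rprod_scal n c f : rprod n (fun i => c * f i) = c ^ n * rprod n f.
Proof. induction n; simpl; [lra|]. rewrite IHn. ring. Qed.

Fixpoint zsum (n : nat) (f : nat -> Z) : Z :=
  match n with O => 0%Z | S k => (zsum k f + f k)%Z end.
Lemma zsum_IZR n f : IZR (zsum n f) = rsum n (fun i => IZR (f i)).
Proof. induction n; simpl; auto. rewrite plus_IZR, IHn. auto. Qed.

Lemma nth_map_seq {A} (f : nat -> A) n i d : (i < n)%nat -> nth i (map f (seq 0 n)) d = f i.
Proof. intros H. rewrite nth_indep with (d' := f 0%nat) by (rewrite length_map, length_seq; auto).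
rewrite map_nth, seq_nth by auto. auto. Qed.
Lemma fold_plus_seq f n : fold_right Rplus 0 (map f (seq 0 n)) = rsum n f.
Proof. induction n; [simpl; auto|]. rewrite seq_S, map_app, fold_right_app. simpl.
simpl. rewrite <- IHn. clear IHn. generalize (map f (seq 0 n)). intros l; induction l; simpl; [lra|]. rewrite IHl. lra. Qed.
Lemma fold_mult_seq f n : fold_right Rmult 1 (map f (seq 0 n)) = rprod n f.
Proof. induction n; [simpl; auto|]. rewrite seq_S, map_app, fold_right_app. simpl.
simpl. rewrite <- IHn. clear IHn. generalize (map f (seq 0 n)). intros l; induction l; simpl; [lra|]. rewrite IHl. lra. Qed.

Lemma rsum_seq_flat {A B} (f : A -> list B) (g : nat -> A) K :
  INR (length (flat_map f (map g (seq 0 K)))) = rsum K (fun j => INR (length (f (g j)))).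
Proof. induction K; [simpl; auto|]. rewrite seq_S, map_app, flat_map_app, length_app, plus_INR, IHK.
simpl. rewrite app_nil_r. auto. Qed.

Lemma telescope K (F : nat -> R) : rsum K (fun j => F j - F (S j)) = F 0%nat - F K.
Proof. induction K; simpl; [lra|]. rewrite IHK. lra. Qed.

Lemma NoDup_flat_map {A B} (f : A -> list B) (l : list A) :
  NoDup l -> (forall x, In x l -> NoDup (f x)) ->
  (forall x y b, In x l -> In y l -> In b (f x) -> In b (f y) -> x = y) ->
  NoDup (flat_map f l).
Proof. induction l as [|a l IH]; intros Hl Hf Hd; simpl. constructor.
inversion Hl; subst. apply NoDup_app. apply Hf; simpl; auto.
apply IH; auto. intros; apply Hf; simpl; auto. intros; eapply Hd; simpl; eauto.
intros b Hb Hb'. apply in_flat_map in Hb'. destruct Hb' as [y [Hy Hby]].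
assert (a = y) by (eapply Hd; simpl; eauto). subst. auto. Qed.

Lemma NoDup_map_inj {A B} (f : A -> B) l : NoDup l ->
  (forall x y, In x l -> In y l -> f x = f y -> x = y) -> NoDup (map f l).
Proof. intros H1 H2. apply NoDup_map_NoDup_ForallPairs; [|auto]. intros x y Hx Hy; apply H2; auto. Qed.

Lemma flat_map_bounds {A B} (f : A -> list B) l lo hi :
  (forall x, In x l -> lo <= INR (length (f x)) <= hi) ->
  INR (length l) * lo <= INR (length (flat_map f l)) <= INR (length l) * hi.
Proof. induction l; intros H; cbn [flat_map length]. simpl; lra.
rewrite length_app, plus_INR, S_INR. assert (IH := IHl (fun x Hx => H x (or_intror Hx))).
assert (H1 := H a (or_introl eq_refl)). lra. Qed.

Lemma pow_diff m p q : 0 <= p <= q ->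
  INR (S m) * (q - p) * p ^ m <= q ^ S m - p ^ S m <= INR (S m) * (q - p) * q ^ m.
Proof. intros Hpq. induction m.
- simpl. lra.
- destruct IHm as [IH1 IH2].
  assert (E : q ^ S (S m) - p ^ S (S m) = q * (q ^ S m - p ^ S m) + p ^ S m * (q - p)) by (simpl; ring).
  rewrite E. rewrite (S_INR (S m)).
  assert (Hpm : p ^ S m <= q ^ S m) by (apply pow_incr; lra).
  assert (Hp0 : 0 <= p ^ m) by (apply pow_le; lra).
  assert (Hd0 : 0 <= q ^ S m - p ^ S m) by lra.
  assert (HS : 0 <= INR (S m)) by apply pos_INR.
  split.
  + assert (p * (INR (S m) * (q - p) * p ^ m) <= q * (q ^ S m - p ^ S m)).
    { apply Rle_trans with (q * (INR (S m) * (q - p) * p ^ m)).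
      apply Rmult_le_compat_r; [|lra]. apply Rmult_le_pos; [apply Rmult_le_pos|]; lra.
      apply Rmult_le_compat_l; lra. }
    simpl in *. nra.
  + assert (q * (q ^ S m - p ^ S m) <= q * (INR (S m) * (q - p) * q ^ m)) by (apply Rmult_le_compat_l; lra).
    assert (p ^ S m * (q - p) <= q ^ S m * (q - p)) by (apply Rmult_le_compat_r; lra).
    simpl in *. nra.
Qed.

Lemma Rdiv_le_0_compat a b : 0 <= a -> 0 < b -> 0 <= a / b.
Proof. intros. unfold Rdiv. apply Rmult_le_pos; auto. left; apply Rinv_0_lt_compat; auto. Qed.

Fixpoint enumN (c : list R) (T : R) : list (list nat) :=
  match c with
  | nil => if Rle_dec 0 T then (nil :: nil) else nil
  | a :: cs => flat_map (fun j => map (cons j) (enumN cs (T - a * INR j)))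
                        (seq 0 (Z.to_nat (up (T / a))))
  end.

Fixpoint dotc (c : list R) (j : list nat) : R :=
  match c, j with
  | a :: cs, x :: js => a * INR x + dotc cs js
  | _, _ => 0
  end.

Notation allpos c := (forall a0, In a0 c -> 0 < a0).

Lemma dotc_nonneg c j : allpos c -> 0 <= dotc c j.
Proof. revert j; induction c as [|a c IH]; intros j H; destruct j; simpl; try lra.
assert (0 < a) by (apply H; simpl; auto). assert (0 <= INR n) by apply pos_INR.
assert (0 <= dotc c j) by (apply IH; intros; apply H; simpl; auto). nra. Qed.

Lemma up_nat_lt (x : nat) (y : R) : INR x <= y -> (x < Z.to_nat (up y))%nat.
Proof. intros H. destruct (archimed y) as [H1 _].
assert (Hp : (0 < up y)%Z). { apply lt_IZR. assert (0 <= INR x) by apply pos_INR. lra. }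
apply INR_lt. rewrite (INR_IZR_INZ (Z.to_nat _)), Z2Nat.id by lia. lra. Qed.

Lemma enumN_spec c T j : allpos c ->
  (In j (enumN c T) <-> length j = length c /\ dotc c j <= T).
Proof. revert T j; induction c as [|a c IH]; intros T j Hc; simpl.
- destruct (Rle_dec 0 T); simpl; split.
  + intros [<-|[]]; simpl; split; [auto|lra].
  + intros [H1 H2]. destruct j; simpl in H1; [auto|lia].
  + intros [].
  + intros [H1 H2]. destruct j; simpl in *; [lra|lia].
- assert (Ha : 0 < a) by (apply Hc; simpl; auto).
  assert (Hc' : allpos c) by (intros x Hx; apply Hc; simpl; auto).
  rewrite in_flat_map. split.
  + intros [x [Hx Hj]]. apply in_map_iff in Hj. destruct Hj as [j' [<- Hj']].
    apply IH in Hj'; auto. simpl. split; [lia|lra].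
  + intros [H1 H2]. destruct j as [|x j]; simpl in H1; [lia|]. simpl in H2.
    exists x. split.
    * apply in_seq. split; [lia|]. simpl. apply up_nat_lt.
      assert (0 <= dotc c j) by (apply dotc_nonneg; auto).
      apply Rmult_le_reg_l with a; auto. field_simplify; lra.
    * apply in_map. apply IH; auto. split; [lia|lra].
Qed.

Lemma enumN_nodup c T : allpos c -> NoDup (enumN c T).
Proof. revert T; induction c as [|a c IH]; intros T Hc; simpl.
- destruct (Rle_dec 0 T); repeat constructor; auto.
- assert (Hc' : allpos c) by (intros x Hx; apply Hc; simpl; auto).
  apply NoDup_flat_map. apply seq_NoDup.
  intros x _. apply NoDup_map_inj. apply IH; auto. intros y z _ _ H; inversion H; auto.
  intros x y b _ _ H1 H2. apply in_map_iff in H1, H2.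
  destruct H1 as [? [<- _]]. destruct H2 as [? [H _]]. inversion H; auto.
Qed.

Lemma enumN_neg c T : allpos c -> T < 0 -> enumN c T = nil.
Proof. intros Hc HT. destruct (enumN c T) as [|j l] eqn:E; auto.
assert (In j (enumN c T)) by (rewrite E; simpl; auto).
apply enumN_spec in H; auto. destruct H. assert (0 <= dotc c j) by (apply dotc_nonneg; auto). lra. Qed.

Lemma enumN_len_cons a c T : INR (length (enumN (a :: c) T)) =
  rsum (Z.to_nat (up (T / a))) (fun j => INR (length (enumN c (T - a * INR j)))).
Proof. simpl. rewrite <- (map_id (seq 0 _)). rewrite rsum_seq_flat.
apply rsum_ext. intros; rewrite length_map; auto. Qed.

Lemma up_gt_K a T : 0 < a -> 0 <= T -> T - a * INR (Z.to_nat (up (T / a))) < 0.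
Proof. intros Ha HT. destruct (archimed (T / a)) as [H1 _].
assert (0 <= T / a) by (apply Rdiv_le_0_compat; lra).
assert (Hp : (0 < up (T / a))%Z) by (apply lt_IZR; lra).
rewrite INR_IZR_INZ, Z2Nat.id by lia.
assert (T = a * (T / a)) by (field; lra). nra. Qed.

Definition prodl (c : list R) := fold_right Rmult 1 c.
Definition suml (c : list R) := fold_right Rplus 0 c.

Lemma suml_nonneg c : allpos c -> 0 <= suml c.
Proof. induction c; simpl; intros H; [lra|]. assert (0 < a) by (apply H; simpl; auto).
assert (0 <= suml c) by (apply IHc; intros; apply H; simpl; auto). lra. Qed.
Lemma prodl_pos c : allpos c -> 0 < prodl c.
Proof. induction c; simpl; intros H; [lra|]. assert (0 < a) by (apply H; simpl; auto).
assert (0 < prodl c) by (apply IHc; intros; apply H; simpl; auto). nra. Qed.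

Lemma enumN_bounds c T : allpos c -> 0 <= T ->
  T ^ length c / (INR (fact (length c)) * prodl c) <= INR (length (enumN c T)) <=
  (T + suml c) ^ length c / (INR (fact (length c)) * prodl c).
Proof.
revert T; induction c as [|a c IH]; intros T Hc HT.
- simpl. destruct (Rle_dec 0 T); [|lra]. simpl. lra.
- assert (Ha : 0 < a) by (apply Hc; simpl; auto).
  assert (Hc' : allpos c) by (intros x Hx; apply Hc; simpl; auto).
  set (d := length c). set (P := prodl c). set (Ss := suml c).
  assert (HP : 0 < P) by (apply prodl_pos; auto).
  assert (HS : 0 <= Ss) by (apply suml_nonneg; auto).
  assert (Hf : 0 < INR (fact d)) by (apply lt_0_INR, lt_O_fact).
  assert (HfS : INR (fact (S d)) = INR (S d) * INR (fact d)) by (rewrite <- mult_INR; auto).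
  change (length (a :: c)) with (S d). change (prodl (a :: c)) with (a * P). change (suml (a :: c)) with (a + Ss).
  rewrite enumN_len_cons. set (K := Z.to_nat (up (T / a))).
  assert (HK : T - a * INR K < 0) by (apply up_gt_K; auto).
  assert (HSd : 0 < INR (S d)) by (apply lt_0_INR; lia).
  split.
  + set (H := fun x => if Rle_dec 0 x then x ^ S d / (INR (fact (S d)) * (a * P)) else 0).
    apply Rle_trans with (rsum K (fun j => H (T - a * INR j) - H (T - a * INR (S j)))).
    * rewrite telescope. unfold H. simpl (INR 0). rewrite Rmult_0_r, Rminus_0_r.
      destruct (Rle_dec 0 T); [|lra]. destruct (Rle_dec 0 (T - a * INR K)); [lra|]. lra.
    * apply rsum_le. intros j _. set (q := T - a * INR j).
      assert (Eq : T - a * INR (S j) = q - a) by (unfold q; rewrite S_INR; ring).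
      rewrite Eq. unfold H.
      destruct (Rle_dec 0 q).
      -- assert (IHq := proj1 (IH q Hc' r)). fold d P in IHq.
         apply Rle_trans with (q ^ d / (INR (fact d) * P)); [|exact IHq].
         rewrite HfS. destruct (Rle_dec 0 (q - a)).
         ++ destruct (pow_diff d (q - a) q) as [_ Hu]; [lra|].
            replace (q - (q - a)) with a in Hu by ring.
            apply Rle_trans with ((INR (S d) * a * q ^ d) / (INR (S d) * INR (fact d) * (a * P))).
            ** unfold Rdiv. rewrite <- Rmult_minus_distr_r. apply Rmult_le_compat_r; [|lra].
               left; apply Rinv_0_lt_compat. repeat apply Rmult_lt_0_compat; auto.
            ** right. field. repeat split; lra.
         ++ assert (Hq0 : 0 <= q ^ d) by (apply pow_le; lra).
            apply Rle_trans with ((INR (S d) * a * q ^ d) / (INR (S d) * INR (fact d) * (a * P))).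
            ** rewrite Rminus_0_r. unfold Rdiv. apply Rmult_le_compat_r.
               left; apply Rinv_0_lt_compat. repeat apply Rmult_lt_0_compat; auto.
               replace (q ^ S d) with (q * q ^ d) by (simpl; ring).
               assert (1 <= INR (S d)) by (apply (le_INR 1); lia).
               assert (0 <= q ^ d * (INR (S d) * a - q)) by (apply Rmult_le_pos; nra). nra.
            ** right. field. repeat split; lra.
      -- destruct (Rle_dec 0 (q - a)); [lra|]. rewrite Rminus_0_r.
         apply pos_INR.
  + set (H := fun x => if Rle_dec 0 (x + Ss) then (x + Ss) ^ S d / (INR (fact (S d)) * (a * P)) else 0).
    apply Rle_trans with (rsum K (fun j => H (T - a * INR j + a) - H (T - a * INR (S j) + a))).
    * apply rsum_le. intros j _. set (q := T - a * INR j).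
      assert (Eq : T - a * INR (S j) + a = q) by (unfold q; rewrite S_INR; ring).
      rewrite Eq. unfold H.
      destruct (Rle_dec 0 q).
      -- assert (IHq := proj2 (IH q Hc' r)). fold d P Ss in IHq.
         apply Rle_trans with ((q + Ss) ^ d / (INR (fact d) * P)); [exact IHq|].
         destruct (Rle_dec 0 (q + a + Ss)); [|lra]. destruct (Rle_dec 0 (q + Ss)); [|lra].
         rewrite HfS.
         destruct (pow_diff d (q + Ss) (q + a + Ss)) as [Hl _]; [lra|].
         replace (q + a + Ss - (q + Ss)) with a in Hl by ring.
         apply Rle_trans with ((INR (S d) * a * (q + Ss) ^ d) / (INR (S d) * INR (fact d) * (a * P))).
         ** right. field. repeat split; lra.
         ** unfold Rdiv. rewrite <- Rmult_minus_distr_r. apply Rmult_le_compat_r; [|lra].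
            left; apply Rinv_0_lt_compat. repeat apply Rmult_lt_0_compat; auto.
      -- rewrite enumN_neg; auto; [|lra]. simpl length. simpl INR.
         assert (Hden : 0 < INR (fact (S d)) * (a * P)) by (rewrite HfS; repeat apply Rmult_lt_0_compat; auto).
         destruct (Rle_dec 0 (q + a + Ss)); destruct (Rle_dec 0 (q + Ss)); try lra.
         ++ assert ((q + Ss) ^ S d <= (q + a + Ss) ^ S d) by (apply pow_incr; lra).
            unfold Rdiv. rewrite <- Rmult_minus_distr_r. apply Rmult_le_pos; [lra|].
            left; apply Rinv_0_lt_compat; auto.
         ++ rewrite Rminus_0_r. apply Rdiv_le_0_compat; [apply pow_le; lra|auto].
    * rewrite (telescope K (fun j => H (T - a * INR j + a))). unfold H at 1. simpl (INR 0).
      rewrite Rmult_0_r, Rminus_0_r. destruct (Rle_dec 0 (T + a + Ss)); [|lra].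
      assert (0 <= H (T - a * INR K + a)) by (unfold H; destruct (Rle_dec _ _);
        [apply Rdiv_le_0_compat; [apply pow_le; lra| rewrite HfS; repeat apply Rmult_lt_0_compat; auto]|lra]).
      replace (T + (a + Ss)) with (T + a + Ss) by ring. lra.
Qed.

Definition coef n v (w : nat -> R) (i : nat) : R := rsum n (fun j => w j * LA.Binv n v j i).

Lemma coef_repr n v : lin_indep n v -> forall w j, (j < n)%nat ->
  w j = rsum n (fun i => coef n v w i * IZR (v i j)).
Proof. intros H w j Hj. exact (LA.LA1 n v H w j Hj). Qed.

Lemma coef_uniq n v : lin_indep n v -> forall w a,
  (forall j, (j < n)%nat -> w j = rsum n (fun i => a i * IZR (v i j))) ->
  forall i, (i < n)%nat -> coef n v w i = a i.
Proof. intros Hli w a Hw i Hi.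
assert (H := Hli (fun k => coef n v w k - a k)). simpl in H.
assert (coef n v w i - a i = 0); [|lra]. apply H; auto. intros j Hj.
rewrite (rsum_ext _ _ (fun k => coef n v w k * IZR (v k j) + - (a k * IZR (v k j)))) by (intros; ring).
rewrite rsum_plus, rsum_opp, <- coef_repr, <- Hw; auto. ring. Qed.

Lemma coef_lin n v al be w h i :
  coef n v (fun j => al * w j + be * h j) i = al * coef n v w i + be * coef n v h i.
Proof. unfold coef. rewrite <- !rsum_scal, <- rsum_plus. apply rsum_ext; intros; ring. Qed.

Lemma coef_ext n v w w' i : (forall j, (j < n)%nat -> w j = w' j) -> coef n v w i = coef n v w' i.
Proof. intros H; unfold coef; apply rsum_ext; intros; rewrite H; auto. Qed.

Lemma dot_decomp n v : lin_indep n v -> forall u w,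
  dot n u w = rsum n (fun i => coef n v w i * dot n u (zvec (v i))).
Proof. intros Hli u w. unfold dot.
rewrite (rsum_ext _ _ (fun j => rsum n (fun i => u j * (coef n v w i * IZR (v i j))))).
rewrite rsum_swap. apply rsum_ext. intros i _. rewrite <- rsum_scal. apply rsum_ext. intros j _. unfold zvec. ring.
intros j Hj. rewrite (coef_repr n v Hli w j Hj), <- rsum_scal. auto. Qed.

Lemma sigma_vi n v i : (i < n)%nat -> in_sigma n v (zvec (v i)).
Proof. intros Hi. exists (fun k => if Nat.eqb k i then 1 else 0). split.
intros k _; destruct (Nat.eqb k i); lra. intros j Hj. rewrite rsum_delta by auto. auto. Qed.

Lemma in_dual_iff n v : lin_indep n v -> forall u,
  in_dual n v u <-> (forall i, (i < n)%nat -> 0 <= dot n u (zvec (v i))).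
Proof. intros Hli u. split.
- intros H i Hi. apply H. apply sigma_vi; auto.
- intros H y [a [Ha Hy]]. unfold dot.
  rewrite (rsum_ext _ _ (fun j => rsum n (fun i => a i * (u j * IZR (v i j))))).
  rewrite rsum_swap. apply rsum_nonneg. intros i Hi. rewrite rsum_scal. apply Rmult_le_pos; auto.
  apply H; auto.
  intros j Hj. rewrite Hy, <- rsum_scal by auto. apply rsum_ext; intros; ring. Qed.

Lemma sigma_coef n v : lin_indep n v -> forall y, in_sigma n v y -> forall i, (i < n)%nat -> 0 <= coef n v y i.
Proof. intros Hli y [a [Ha Hy]] i Hi. rewrite (coef_uniq n v Hli y a Hy i Hi). auto. Qed.

Lemma interior_pos n v xi : lin_indep n v -> in_interior_sigma n v xi -> forall i, (i < n)%nat -> 0 < coef n v xi i.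
Proof. intros Hli [eps [He Hint]] i Hi.
set (s := fun j => rsum n (fun k => IZR (v k j))).
set (M := rsum n (fun j => Rabs (s j))).
assert (HM : 0 <= M) by (apply rsum_nonneg; intros; apply Rabs_pos).
set (del := eps / (2 * (M + 1))).
assert (Hdel : 0 < del) by (unfold del; apply Rdiv_lt_0_compat; lra).
set (y := fun j => 1 * xi j + (- del) * s j).
assert (Hy : in_sigma n v y).
{ apply Hint. intros j Hj. unfold y. replace (1 * xi j + - del * s j - xi j) with (- (del * s j)) by ring.
  rewrite Rabs_Ropp, Rabs_mult, (Rabs_right del) by lra.
  assert (Rabs (s j) <= M) by (apply (rsum_term n (fun j => Rabs (s j))); auto; intros; apply Rabs_pos).
  apply Rle_lt_trans with (del * M). apply Rmult_le_compat_l; lra.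
  unfold del. apply Rmult_lt_reg_r with (2 * (M + 1)); [lra|]. field_simplify; nra. }
assert (H := sigma_coef n v Hli y Hy i Hi). unfold y in H. rewrite coef_lin in H.
assert (Hs : coef n v s i = 1).
{ apply (coef_uniq n v Hli s (fun _ => 1)); auto. intros j Hj. unfold s. apply rsum_ext; intros; ring. }
rewrite Hs in H. lra. Qed.

Definition Kz n v (z : nat -> Z) (i : nat) : R := rsum n (fun j => IZR (z j) * IZR (v i j)).
Definition inL n v (k : nat -> Z) : Prop := exists z, forall i, (i < n)%nat -> Kz n v z i = IZR (k i).
Definition zof n v (k : nat -> Z) : nat -> Z :=
  epsilon (inhabits (fun _ => 0%Z)) (fun z => forall i, (i < n)%nat -> Kz n v z i = IZR (k i)).

Lemma zof_spec n v k : inL n v k -> forall i, (i < n)%nat -> Kz n v (zof n v k) i = IZR (k i).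
Proof. intros H. unfold zof. apply (epsilon_spec (inhabits (fun _ => 0%Z)) (fun z => forall i, (i < n)%nat -> Kz n v z i = IZR (k i)) H). Qed.

Lemma Kz_ext n v z z' i : (forall j, (j < n)%nat -> z j = z' j) -> Kz n v z i = Kz n v z' i.
Proof. intros H; unfold Kz; apply rsum_ext; intros; rewrite H; auto. Qed.

Lemma Kz_inj n v : lin_indep n v -> forall z z', (forall i, (i < n)%nat -> Kz n v z i = Kz n v z' i) ->
  forall j, (j < n)%nat -> z j = z' j.
Proof. intros Hli z z' H j Hj.
assert (IZR (z j) - IZR (z' j) = 0); [|apply eq_IZR; lra].
apply (LA3' n v Hli (fun j => IZR (z j) - IZR (z' j))); auto.
intros i Hi. assert (E := H i Hi). unfold Kz in E.
rewrite (rsum_ext _ _ (fun j => IZR (z j) * IZR (v i j) + - (IZR (z' j) * IZR (v i j)))) by (intros; ring).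
rewrite rsum_plus, rsum_opp, E. ring. Qed.

Lemma inL_ext n v k k' : (forall i, (i < n)%nat -> k i = k' i) -> inL n v k -> inL n v k'.
Proof. intros H [z Hz]. exists z. intros i Hi. rewrite Hz, H; auto. Qed.

Lemma inL_shift n v (D : Z) (zD : nat -> nat -> Z) :
  (forall i, (i < n)%nat -> forall i', (i' < n)%nat ->
     rsum n (fun j => IZR (zD i j) * IZR (v i' j)) = (if Nat.eqb i i' then IZR D else 0)) ->
  forall k t, inL n v k -> inL n v (fun i => k i + D * t i)%Z.
Proof. intros HzD k t [z Hz].
exists (fun j => z j + zsum n (fun i' => t i' * zD i' j))%Z. intros i Hi.
unfold Kz. rewrite (rsum_ext _ _ (fun j => IZR (z j) * IZR (v i j) +
   rsum n (fun i' => IZR (t i') * (IZR (zD i' j) * IZR (v i j))))).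
rewrite rsum_plus. fold (Kz n v z i). rewrite Hz by auto. rewrite rsum_swap.
rewrite (rsum_ext _ _ (fun i' => (if Nat.eqb i' i then 1 else 0) * (IZR D * IZR (t i')))).
rewrite rsum_delta by auto. rewrite plus_IZR, mult_IZR. ring.
intros i' Hi'. rewrite rsum_scal. rewrite HzD by auto. destruct (Nat.eqb i' i); ring.
intros j Hj. rewrite plus_IZR, zsum_IZR, Rmult_plus_distr_r. f_equal.
rewrite Rmult_comm, <- rsum_scal. apply rsum_ext. intros; rewrite mult_IZR; ring. Qed.

Fixpoint boxlist (D : nat) (n : nat) : list (list nat) :=
  match n with
  | O => nil :: nil
  | S k => flat_map (fun a => map (cons a) (boxlist D k)) (seq 0 D)
  end.

Lemma boxlist_spec D n r : In r (boxlist D n) <-> length r = n /\ (forall x, In x r -> (x < D)%nat).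
Proof. revert r; induction n; intros r; simpl.
- split. intros [<-|[]]. split; auto. intros x []. intros [H _]. destruct r; simpl in H; auto; lia.
- rewrite in_flat_map. split.
  + intros [a [Ha Hr]]. apply in_map_iff in Hr. destruct Hr as [r' [<- Hr']]. apply IHn in Hr'.
    apply in_seq in Ha. simpl. split. lia. intros x [<-|Hx]. lia. apply Hr'; auto.
  + intros [H1 H2]. destruct r as [|a r]; simpl in H1; [lia|]. exists a. split.
    apply in_seq. assert (a < D)%nat by (apply H2; simpl; auto). lia.
    apply in_map. apply IHn. split. lia. intros; apply H2; simpl; auto. Qed.

Lemma boxlist_nodup D n : NoDup (boxlist D n).
Proof. induction n; simpl. repeat constructor; auto.
apply NoDup_flat_map. apply seq_NoDup.
intros x _. apply NoDup_map_inj; auto. intros y z _ _ H; inversion H; auto.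
intros x y b _ _ H1 H2. apply in_map_iff in H1, H2.
destruct H1 as [? [<- _]]. destruct H2 as [? [H _]]. inversion H; auto. Qed.

Lemma dotc_rsum n c j : length c = n -> length j = n ->
  dotc c j = rsum n (fun i => nth i c 0 * INR (nth i j 0%nat)).
Proof. revert c j; induction n; intros c j Hc Hj.
- destruct c; destruct j; simpl in *; try lia; auto.
- destruct c as [|a c]; destruct j as [|x j]; simpl in Hc, Hj; try lia.
  rewrite rsum_shift. simpl. rewrite IHn by lia. auto. Qed.

Lemma nth_ext_n {A} n (l l' : list A) d : length l = n -> length l' = n ->
  (forall i, (i < n)%nat -> nth i l d = nth i l' d) -> l = l'.
Proof. intros H1 H2 H. apply nth_ext with d d; [lia|]. intros i Hi. apply H. lia. Qed.

Lemma divmod_uniq (D a1 a2 b1 b2 : Z) : (0 <= a1 < D)%Z -> (0 <= a2 < D)%Z ->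
  (a1 + D * b1 = a2 + D * b2)%Z -> a1 = a2 /\ b1 = b2.
Proof. intros H1 H2 E.
assert (b1 = b2) by nia. subst. lia. Qed.

Definition tl n (z : nat -> Z) : list Z := map z (seq 0 n).
Definition zl (z : list Z) (j : nat) : Z := nth j z 0%Z.
Definition rvec (r : list nat) (i : nat) : Z := Z.of_nat (nth i r 0%nat).
Definition kof (D : Z) (r j : list nat) (i : nat) : Z := (rvec r i + D * Z.of_nat (nth i j 0%nat))%Z.
Definition Rlist n v D := filter (fun r => if excluded_middle_informative (inL n v (rvec r)) then true else false)
  (boxlist (Z.to_nat D) n).
Definition cvec n D (b : nat -> R) := map (fun i => IZR D * b i) (seq 0 n).
Definition sr n (b : nat -> R) r := rsum n (fun i => b i * INR (nth i r 0%nat)).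
Definition Lw n v D b m := flat_map (fun r => map (fun j => tl n (zof n v (kof D r j)))
   (enumN (cvec n D b) (INR m - sr n b r))) (Rlist n v D).

Lemma Rlist_spec n v D r : In r (Rlist n v D) <-> In r (boxlist (Z.to_nat D) n) /\ inL n v (rvec r).
Proof. unfold Rlist. rewrite filter_In. destruct (excluded_middle_informative _); intuition congruence. Qed.

Lemma zl_tl n f j : (j < n)%nat -> zl (tl n f) j = f j.
Proof. intros; unfold zl, tl; apply nth_map_seq; auto. Qed.

Lemma lattice_dot n v z m i : dot n (lattice_pt n z m) (zvec (v i)) = Kz n v (zl z) i / INR m.
Proof. unfold dot, Kz, lattice_pt, zvec, zl, Rdiv. rewrite Rmult_comm, <- rsum_scal. apply rsum_ext; intros; ring. Qed.

Lemma dual_char n v w u : lin_indep n v ->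
  dual_trunc n v w u <-> (forall i, (i < n)%nat -> 0 <= dot n u (zvec (v i))) /\
      rsum n (fun i => coef n v w i * dot n u (zvec (v i))) <= 1.
Proof. intros Hli. unfold dual_trunc. rewrite (in_dual_iff n v Hli), (dot_decomp n v Hli). tauto. Qed.

Lemma allpos_cvec n D b : (0 < D)%Z -> (forall i, (i < n)%nat -> 0 < b i) -> allpos (cvec n D b).
Proof. intros HD Hb a Ha. unfold cvec in Ha. apply in_map_iff in Ha. destruct Ha as [i [<- Hi]].
apply in_seq in Hi. apply Rmult_lt_0_compat. apply IZR_lt; auto. apply Hb; lia. Qed.

Lemma len_cvec n D b : length (cvec n D b) = n.
Proof. unfold cvec; rewrite length_map, length_seq; auto. Qed.

Lemma dotc_cvec n D b j : length j = n ->
  dotc (cvec n D b) j = rsum n (fun i => IZR D * b i * INR (nth i j 0%nat)).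
Proof. intros H. rewrite (dotc_rsum n) by (auto; apply len_cvec). apply rsum_ext. intros i Hi.
unfold cvec. rewrite nth_map_seq; auto. Qed.

Lemma kof_sum n D b r j : rsum n (fun i => b i * IZR (kof D r j i)) =
  sr n b r + rsum n (fun i => IZR D * b i * INR (nth i j 0%nat)).
Proof. unfold sr. rewrite <- rsum_plus. apply rsum_ext. intros i _. unfold kof, rvec.
rewrite plus_IZR, mult_IZR, <- !INR_IZR_INZ. ring. Qed.

Section Count.
Variable n : nat.
Variable v : nat -> nat -> Z.
Variable D : Z.
Variable zD : nat -> nat -> Z.
Hypothesis Hli : lin_indep n v.
Hypothesis HD : (0 < D)%Z.
Hypothesis HzD : forall i, (i < n)%nat -> forall i', (i' < n)%nat ->
     rsum n (fun j => IZR (zD i j) * IZR (v i' j)) = (if Nat.eqb i i' then IZR D else 0).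
Variable w : nat -> R.
Hypothesis Hb : forall i, (i < n)%nat -> 0 < coef n v w i.
Variable m : nat.
Hypothesis Hm : (1 <= m)%nat.

Let b := coef n v w.

Lemma inL_kof r j : In r (Rlist n v D) -> inL n v (kof D r j).
Proof. intros Hr. apply Rlist_spec in Hr. destruct Hr as [_ Hr].
apply (inL_shift n v D zD HzD (rvec r) (fun i => Z.of_nat (nth i j 0%nat))); auto. Qed.

Lemma Kz_zof_kof r j i : In r (Rlist n v D) -> (i < n)%nat ->
  Kz n v (zl (tl n (zof n v (kof D r j)))) i = IZR (kof D r j i).
Proof. intros Hr Hi. rewrite <- (zof_spec n v (kof D r j) (inL_kof r j Hr) i Hi).
apply Kz_ext. intros; apply zl_tl; auto. Qed.

Lemma Hmpos : 0 < INR m.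
Proof. apply lt_0_INR; lia. Qed.

Lemma Lw_spec z : In z (Lw n v D b m) <-> length z = n /\ dual_trunc n v w (lattice_pt n z m).
Proof.
assert (Hmp := Hmpos).
assert (Hcp := allpos_cvec n D b HD Hb).
unfold Lw. rewrite in_flat_map. split.
- intros [r [Hr Hz]]. apply in_map_iff in Hz. destruct Hz as [j [<- Hj]].
  apply enumN_spec in Hj; auto. rewrite len_cvec in Hj. destruct Hj as [Hjl Hjd].
  split. unfold tl; rewrite length_map, length_seq; auto.
  apply dual_char; auto. split.
  + intros i Hi. rewrite lattice_dot, Kz_zof_kof by auto. apply Rdiv_le_0_compat; auto.
    apply IZR_le. unfold kof, rvec. lia.
  + rewrite (rsum_ext _ _ (fun i => / INR m * (b i * IZR (kof D r j i)))).
    rewrite rsum_scal, kof_sum. rewrite dotc_cvec in Hjd by auto.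
    apply Rmult_le_reg_l with (INR m); auto. rewrite <- Rmult_assoc, Rinv_r by lra. lra.
    intros i Hi. rewrite lattice_dot, Kz_zof_kof by auto. unfold b, Rdiv. ring.
- intros [Hzl Hdt]. apply dual_char in Hdt; auto. destruct Hdt as [H1 H2].
  set (kz := fun i => zsum n (fun j => nth j z 0 * v i j)%Z).
  assert (Ekz : forall i, IZR (kz i) = Kz n v (zl z) i).
  { intros i. unfold kz, Kz. rewrite zsum_IZR. apply rsum_ext. intros; rewrite mult_IZR; auto. }
  assert (Hk0 : forall i, (i < n)%nat -> (0 <= kz i)%Z).
  { intros i Hi. apply le_IZR. rewrite Ekz. assert (H := H1 i Hi). rewrite lattice_dot in H.
    apply Rmult_le_reg_r with (/ INR m). apply Rinv_0_lt_compat; auto. rewrite Rmult_0_l. exact H. }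
  set (r := map (fun i => Z.to_nat (kz i mod D)) (seq 0 n)).
  set (jl := map (fun i => Z.to_nat (kz i / D)) (seq 0 n)).
  assert (Hrl : length r = n) by (unfold r; rewrite length_map, length_seq; auto).
  assert (Hjl : length jl = n) by (unfold jl; rewrite length_map, length_seq; auto).
  assert (Ekof : forall i, (i < n)%nat -> kof D r jl i = kz i).
  { intros i Hi. unfold kof, rvec, r, jl. rewrite !nth_map_seq by auto.
    assert (0 <= kz i mod D)%Z by (apply Z.mod_pos_bound; lia).
    assert (0 <= kz i / D)%Z by (apply Z.div_pos; [apply Hk0; auto|lia]).
    rewrite !Z2Nat.id by lia. rewrite (Z_div_mod_eq_full (kz i) D) at 3. ring. }
  assert (HrR : In r (Rlist n v D)).
  { apply Rlist_spec. split.
    - apply boxlist_spec. split; auto. intros x Hx. unfold r in Hx. apply in_map_iff in Hx.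
      destruct Hx as [i [<- Hi]]. apply in_seq in Hi.
      assert (0 <= kz i mod D < D)%Z by (apply Z.mod_pos_bound; lia).
      apply Z2Nat.inj_lt; lia.
    - assert (HL : inL n v kz) by (exists (zl z); intros i Hi; rewrite Ekz; auto).
      apply (inL_ext n v (fun i => kz i + D * (- (kz i / D)))%Z).
      + intros i Hi. unfold rvec, r. rewrite nth_map_seq by auto.
        assert (0 <= kz i mod D)%Z by (apply Z.mod_pos_bound; lia).
        rewrite Z2Nat.id by lia. rewrite (Z_div_mod_eq_full (kz i) D) at 1. ring.
      + apply (inL_shift n v D zD HzD); auto. }
  assert (Hsum : rsum n (fun i => b i * IZR (kof D r jl i)) <= INR m).
  { rewrite (rsum_ext _ _ (fun i => INR m * (b i * (Kz n v (zl z) i / INR m)))).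
    rewrite rsum_scal. rewrite <- (Rmult_1_r (INR m)) at 2. apply Rmult_le_compat_l; [lra|].
    rewrite (rsum_ext _ _ (fun i => coef n v w i * dot n (lattice_pt n z m) (zvec (v i)))); auto.
    intros i Hi; rewrite lattice_dot; auto.
    intros i Hi. rewrite Ekof, Ekz by auto. field. lra. }
  exists r. split; auto. apply in_map_iff. exists jl. split.
  + apply nth_ext_n with n 0%Z; auto. unfold tl; rewrite length_map, length_seq; auto.
    intros i Hi. fold (zl (tl n (zof n v (kof D r jl))) i). rewrite zl_tl by auto.
    change (nth i z 0%Z) with (zl z i). apply (Kz_inj n v Hli (zof n v (kof D r jl)) (zl z)); auto. intros i' Hi'.
    rewrite zof_spec by (auto; apply inL_kof; auto). rewrite Ekof, Ekz by auto.
    apply Kz_ext. intros; auto.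
  + apply enumN_spec; auto. rewrite len_cvec. split; auto.
    rewrite dotc_cvec by auto. rewrite kof_sum in Hsum. lra.
Qed.

Lemma Lw_nodup : NoDup (Lw n v D b m).
Proof.
assert (Hcp := allpos_cvec n D b HD Hb).
assert (Hinj : forall r r' j j', In r (Rlist n v D) -> In r' (Rlist n v D) ->
   In j (enumN (cvec n D b) (INR m - sr n b r)) -> In j' (enumN (cvec n D b) (INR m - sr n b r')) ->
   tl n (zof n v (kof D r j)) = tl n (zof n v (kof D r' j')) -> r = r' /\ j = j').
{ intros r r' j j' Hr Hr' Hj Hj' E.
  assert (Ei : forall i, (i < n)%nat -> kof D r j i = kof D r' j' i).
  { intros i Hi. apply eq_IZR. rewrite <- (Kz_zof_kof r j i Hr Hi), <- (Kz_zof_kof r' j' i Hr' Hi), E. auto. }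
  apply Rlist_spec in Hr, Hr'. destruct Hr as [Hr _]; destruct Hr' as [Hr' _].
  apply boxlist_spec in Hr, Hr'. destruct Hr as [Hrl Hrb]; destruct Hr' as [Hrl' Hrb'].
  apply enumN_spec in Hj, Hj'; auto. rewrite len_cvec in Hj, Hj'.
  destruct Hj as [Hjl _]; destruct Hj' as [Hjl' _].
  assert (Hd : forall i, (i < n)%nat -> nth i r 0%nat = nth i r' 0%nat /\ nth i j 0%nat = nth i j' 0%nat).
  { intros i Hi. assert (Hri : (nth i r 0 < Z.to_nat D)%nat) by (apply Hrb; apply nth_In; lia).
    assert (Hri' : (nth i r' 0 < Z.to_nat D)%nat) by (apply Hrb'; apply nth_In; lia).
    assert (E2 := Ei i Hi). unfold kof, rvec in E2.
    assert (A1 : (0 <= Z.of_nat (nth i r 0%nat) < D)%Z) by lia.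
    assert (A2 : (0 <= Z.of_nat (nth i r' 0%nat) < D)%Z) by lia.
    destruct (divmod_uniq D _ _ _ _ A1 A2 E2). lia. }
  split; apply nth_ext_n with n 0%nat; auto; intros i Hi; apply Hd; auto. }
unfold Lw. apply NoDup_flat_map.
- apply NoDup_filter, boxlist_nodup.
- intros r Hr. apply NoDup_map_inj. apply enumN_nodup; auto.
  intros j j' Hj Hj' E. apply (Hinj r r j j'); auto.
- intros r r' z Hr Hr' Hz Hz'. apply in_map_iff in Hz, Hz'.
  destruct Hz as [j [Ej Hj]]; destruct Hz' as [j' [Ej' Hj']].
  apply (Hinj r r' j j'); auto. congruence.
Qed.

End Count.

Lemma pow_lo n x : 0 <= x <= 1 -> 1 - INR n * x <= (1 - x) ^ n.
Proof. intros Hx. induction n. simpl; lra. rewrite S_INR. simpl.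
assert (0 <= (1 - x)). lra. assert (0 <= x * INR n) by (apply Rmult_le_pos; [lra|apply pos_INR]). nra. Qed.
Lemma pow_hi n x : 0 <= x <= 1 -> (1 + x) ^ n <= 1 + 3 ^ n * x.
Proof. intros Hx. induction n. simpl; lra. simpl.
assert (0 <= 3 ^ n) by (apply pow_le; lra). assert (1 <= 3 ^ n) by (apply pow_R1_Rle; lra).
assert ((1 + x) * (1 + x) ^ n <= (1 + x) * (1 + 3 ^ n * x)) by (apply Rmult_le_compat_l; lra).
assert (x * x <= x) by nra. assert (3 ^ n * (x * x) <= 3 ^ n * x) by (apply Rmult_le_compat_l; lra).
assert (x <= 3 ^ n * x) by nra.
assert (E : (1 + x) * (1 + 3 ^ n * x) = 1 + x + 3 ^ n * x + 3 ^ n * (x * x)) by ring. lra. Qed.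
Lemma INR_le_3pow n : INR n <= 3 ^ n.
Proof. induction n. simpl; lra. rewrite S_INR. simpl. assert (1 <= 3 ^ n) by (apply pow_R1_Rle; lra). lra. Qed.
Lemma pow_div a c n : c <> 0 -> (a / c) ^ n = a ^ n / c ^ n.
Proof. intros H. unfold Rdiv. rewrite Rpow_mult_distr, pow_inv. auto. Qed.

Lemma INR_toNat z : (0 <= z)%Z -> INR (Z.to_nat z) = IZR z.
Proof. intros H. rewrite INR_IZR_INZ, Z2Nat.id; auto. Qed.

Section Vol.
Variable n : nat.
Variable v : nat -> nat -> Z.
Variable D : Z.
Variable zD : nat -> nat -> Z.
Hypothesis Hli : lin_indep n v.
Hypothesis HD : (0 < D)%Z.
Hypothesis HzD : forall i, (i < n)%nat -> forall i', (i' < n)%nat ->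
     rsum n (fun j => IZR (zD i j) * IZR (v i' j)) = (if Nat.eqb i i' then IZR D else 0).
Variable w : nat -> R.
Hypothesis Hb : forall i, (i < n)%nat -> 0 < coef n v w i.

Let b := coef n v w.
Let NR := INR (length (Rlist n v D)).
Let Sc := IZR D * rsum n b.
Let Pc := IZR D ^ n * rprod n b.

Lemma Pc_pos : 0 < Pc.
Proof. unfold Pc. apply Rmult_lt_0_compat. apply pow_lt, IZR_lt; auto. apply rprod_pos; auto. Qed.
Lemma Sc_nonneg : 0 <= Sc.
Proof. unfold Sc. apply Rmult_le_pos. apply IZR_le; lia. apply rsum_nonneg; intros; left; apply Hb; auto. Qed.

Lemma Lw_bounds m : (1 <= m)%nat -> Sc <= INR m ->
  NR * ((INR m - Sc) ^ n / (INR (fact n) * Pc)) <= INR (length (Lw n v D b m)) <=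
  NR * ((INR m + Sc) ^ n / (INR (fact n) * Pc)).
Proof. intros Hm HSc. unfold Lw. apply flat_map_bounds. intros r Hr. rewrite length_map.
assert (Hcp := allpos_cvec n D b HD Hb).
assert (Hsr : 0 <= sr n b r <= Sc).
{ apply Rlist_spec in Hr. destruct Hr as [Hr _]. apply boxlist_spec in Hr. destruct Hr as [Hrl Hrb].
  unfold sr, Sc. split. apply rsum_nonneg. intros i Hi. apply Rmult_le_pos; [left; apply Hb; auto|apply pos_INR].
  rewrite <- rsum_scal. apply rsum_le. intros i Hi.
  assert (Hri : (nth i r 0 < Z.to_nat D)%nat) by (apply Hrb; apply nth_In; lia).
  apply lt_INR in Hri. rewrite INR_toNat in Hri by lia.
  assert (0 < b i) by (apply Hb; auto). nra. }
assert (HT : 0 <= INR m - sr n b r) by lra.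
destruct (enumN_bounds (cvec n D b) (INR m - sr n b r) Hcp HT) as [Hlo Hhi].
rewrite len_cvec in Hlo, Hhi.
assert (Ep : prodl (cvec n D b) = Pc) by (unfold prodl, cvec, Pc; rewrite fold_mult_seq, rprod_scal; auto).
assert (Es : suml (cvec n D b) = Sc) by (unfold suml, cvec, Sc; rewrite fold_plus_seq, rsum_scal; auto).
rewrite Ep in Hlo, Hhi. rewrite Es in Hhi.
assert (Hden : 0 < INR (fact n) * Pc) by (apply Rmult_lt_0_compat; [apply lt_0_INR, lt_O_fact|apply Pc_pos]).
split.
- eapply Rle_trans; [|exact Hlo]. unfold Rdiv. apply Rmult_le_compat_r. left; apply Rinv_0_lt_compat; auto.
  apply pow_incr. lra.
- eapply Rle_trans; [exact Hhi|]. unfold Rdiv. apply Rmult_le_compat_r. left; apply Rinv_0_lt_compat; auto.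
  apply pow_incr. lra.
Qed.

Lemma Lw_hasvol : has_volume n (dual_trunc n v w) (NR / (INR (fact n) * Pc)).
Proof.
intros eps Heps.
set (V := NR / (INR (fact n) * Pc)).
assert (Hden : 0 < INR (fact n) * Pc) by (apply Rmult_lt_0_compat; [apply lt_0_INR, lt_O_fact|apply Pc_pos]).
assert (HV : 0 <= V) by (apply Rdiv_le_0_compat; [apply pos_INR|auto]).
assert (HSc := Sc_nonneg).
set (C := V * 3 ^ n * Sc).
assert (HC : 0 <= C) by (unfold C; apply Rmult_le_pos; [apply Rmult_le_pos; [auto|apply pow_le; lra]|auto]).
exists (Z.to_nat (up (C / eps + Sc))).
intros m HmM Hm1.
assert (Hmr : C / eps + Sc < INR m).
{ destruct (archimed (C / eps + Sc)) as [H1 _].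
  assert (0 <= C / eps) by (apply Rdiv_le_0_compat; auto).
  apply le_INR in HmM. rewrite INR_toNat in HmM; [lra|]. apply le_IZR. lra. }
assert (Hmp : 0 < INR m) by (apply lt_0_INR; lia).
assert (HCe : C < eps * INR m).
{ assert (C / eps < INR m) by (assert (0 <= C / eps) by (apply Rdiv_le_0_compat; auto); lra).
  assert (C = (C / eps) * eps) by (field; lra). nra. }
exists (Lw n v D b m). split; [apply (Lw_nodup n v D zD); auto|]. split.
{ intros z. apply (Lw_spec n v D zD); auto. }
assert (HSm : Sc <= INR m) by (assert (0 <= C / eps) by (apply Rdiv_le_0_compat; auto); lra).
destruct (Lw_bounds m Hm1 HSm) as [Hlo Hhi].
set (x := Sc / INR m).
assert (Hx : 0 <= x <= 1).
{ unfold x. split. apply Rdiv_le_0_compat; auto. apply Rmult_le_reg_r with (INR m); auto.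
  unfold Rdiv. rewrite Rmult_assoc, Rinv_l by lra. lra. }
assert (Hmn : 0 < INR m ^ n) by (apply pow_lt; auto).
assert (E1 : NR * ((INR m - Sc) ^ n / (INR (fact n) * Pc)) / INR m ^ n = V * (1 - x) ^ n).
{ unfold V, x. replace (1 - Sc / INR m) with ((INR m - Sc) / INR m) by (field; lra).
  rewrite pow_div by lra. assert (0 < Pc) by apply Pc_pos. assert (0 < INR (fact n)) by apply lt_0_INR, lt_O_fact.
  field. repeat split; lra. }
assert (E2 : NR * ((INR m + Sc) ^ n / (INR (fact n) * Pc)) / INR m ^ n = V * (1 + x) ^ n).
{ unfold V, x. replace (1 + Sc / INR m) with ((INR m + Sc) / INR m) by (field; lra).
  rewrite pow_div by lra. assert (0 < Pc) by apply Pc_pos. assert (0 < INR (fact n)) by apply lt_0_INR, lt_O_fact.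
  field. repeat split; lra. }
assert (Hlo' : V * (1 - x) ^ n <= INR (length (Lw n v D b m)) / INR m ^ n).
{ rewrite <- E1. unfold Rdiv. apply Rmult_le_compat_r; [left; apply Rinv_0_lt_compat; auto|]. exact Hlo. }
assert (Hhi' : INR (length (Lw n v D b m)) / INR m ^ n <= V * (1 + x) ^ n).
{ rewrite <- E2. unfold Rdiv. apply Rmult_le_compat_r; [left; apply Rinv_0_lt_compat; auto|]. exact Hhi. }
assert (P1 := pow_lo n x Hx). assert (P2 := pow_hi n x Hx). assert (P3 := INR_le_3pow n).
assert (HVx : V * 3 ^ n * x < eps).
{ unfold x. replace (V * 3 ^ n * (Sc / INR m)) with (C / INR m) by (unfold C; field; lra).
  apply Rmult_lt_reg_r with (INR m); auto. unfold Rdiv. rewrite Rmult_assoc, Rinv_l by lra. lra. }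
assert (A1 : V * (1 - x) ^ n >= V - V * 3 ^ n * x).
{ assert (V * (1 - INR n * x) <= V * (1 - x) ^ n) by (apply Rmult_le_compat_l; auto).
  assert (INR n * x <= 3 ^ n * x) by (apply Rmult_le_compat_r; lra). nra. }
assert (A2 : V * (1 + x) ^ n <= V + V * 3 ^ n * x).
{ assert (V * (1 + x) ^ n <= V * (1 + 3 ^ n * x)) by (apply Rmult_le_compat_l; auto). nra. }
apply Rabs_def1; lra.
Qed.

End Vol.

Lemma has_volume_unique n K a c : has_volume n K a -> has_volume n K c -> a = c.
Proof. intros Ha Hc. destruct (Req_dec a c) as [|Hne]; auto. exfalso.
set (e := Rabs (a - c) / 2). assert (He : 0 < e) by (unfold e; apply Rdiv_lt_0_compat; [apply Rabs_pos_lt; lra|lra]).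
destruct (Ha e He) as [M1 H1]. destruct (Hc e He) as [M2 H2].
set (m := (M1 + M2 + 1)%nat).
destruct (H1 m ltac:(unfold m; lia) ltac:(unfold m; lia)) as [L1 [N1 [S1 B1]]].
destruct (H2 m ltac:(unfold m; lia) ltac:(unfold m; lia)) as [L2 [N2 [S2 B2]]].
assert (length L1 = length L2).
{ apply Nat.le_antisymm; apply NoDup_incl_length; auto; intros z Hz.
  apply S2, S1; auto. apply S1, S2; auto. }
rewrite H in B1. unfold e in *.
assert (Rabs (a - c) <= Rabs (INR (length L2) / INR m ^ n - c) + Rabs (INR (length L2) / INR m ^ n - a)).
{ replace (a - c) with ((INR (length L2) / INR m ^ n - c) - (INR (length L2) / INR m ^ n - a)) by ring.
  eapply Rle_trans; [apply Rabs_triang|]. rewrite Rabs_Ropp. lra. }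
lra. Qed.

Lemma Vol_eq n K a : has_volume n K a -> Vol n K = a.
Proof. intros H. unfold Vol. apply (has_volume_unique n K).
apply (epsilon_spec (inhabits 0) (has_volume n K)). exists a; auto. auto. Qed.

Lemma vol_formula n v : lin_indep n v -> exists Q, 0 < Q /\
  forall w, (forall i, (i < n)%nat -> 0 < coef n v w i) -> volfun n v w = Q / rprod n (coef n v w).
Proof.
intros Hli. destruct (LA4' n v Hli) as [D [HD Hz]].
set (zD := fun i => epsilon (inhabits (fun _ => 0%Z)) (fun z => forall i', (i' < n)%nat ->
    rsum n (fun j => IZR (z j) * IZR (v i' j)) = (if Nat.eqb i i' then IZR D else 0))).
assert (HzD : forall i, (i < n)%nat -> forall i', (i' < n)%nat ->
     rsum n (fun j => IZR (zD i j) * IZR (v i' j)) = (if Nat.eqb i i' then IZR D else 0)).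
{ intros i Hi. unfold zD. apply (epsilon_spec (inhabits (fun _ => 0%Z)) (fun z => forall i', (i' < n)%nat ->
    rsum n (fun j => IZR (z j) * IZR (v i' j)) = (if Nat.eqb i i' then IZR D else 0))). apply Hz; auto. }
set (NR := INR (length (Rlist n v D))).
assert (HNR : 0 < NR).
{ unfold NR. apply lt_0_INR. destruct (Rlist n v D) eqn:E; simpl; [|lia].
  assert (In (repeat 0%nat n) (Rlist n v D)); [|rewrite E in H; destruct H].
  apply Rlist_spec. split.
  - apply boxlist_spec. split. apply repeat_length. intros x Hx. apply repeat_spec in Hx. lia.
  - exists (fun _ => 0%Z). intros i Hi. unfold Kz, rvec. rewrite nth_repeat.
    rewrite (rsum_ext _ _ (fun _ => 0)) by (intros; simpl; ring). apply rsum_0. }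
assert (HDn : 0 < IZR D ^ n) by (apply pow_lt, IZR_lt; auto).
assert (Hf : 0 < INR (fact n)) by apply lt_0_INR, lt_O_fact.
exists (NR / (INR (fact n) * IZR D ^ n)). split.
{ apply Rdiv_lt_0_compat; auto. apply Rmult_lt_0_compat; auto. }
intros w Hb. unfold volfun. rewrite (Vol_eq _ _ _ (Lw_hasvol n v D zD Hli HD HzD w Hb)).
assert (0 < rprod n (coef n v w)) by (apply rprod_pos; auto).
fold NR. field. repeat split; lra.
Qed.

Lemma deriv_local f g x l : derivable_pt_lim f x l ->
  (exists del, 0 < del /\ forall t, Rabs (t - x) < del -> f t = g t) -> derivable_pt_lim g x l.
Proof. intros Hf [del [Hdel Hfg]] eps Heps. destruct (Hf eps Heps) as [d Hd].
assert (Hm : 0 < Rmin d del) by (apply Rmin_pos; [apply cond_pos|auto]).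
exists (mkposreal _ Hm). intros h Hh Hhd. simpl in Hhd.
rewrite <- !Hfg. apply Hd; auto. apply Rlt_le_trans with (Rmin d del); auto. apply Rmin_l.
replace (x - x) with 0 by ring. rewrite Rabs_R0; auto.
replace (x + h - x) with h by ring. apply Rlt_le_trans with (Rmin d del); auto. apply Rmin_r. Qed.

Lemma deriv_lin b g : derivable_pt_lim (fun t => b + g * t) 0 g.
Proof. assert (H := derivable_pt_lim_plus (fct_cte b) (mult_real_fct g id) 0 0 (g * 1)
  (derivable_pt_lim_const b 0) (derivable_pt_lim_scal id g 0 1 (derivable_pt_lim_id 0))).
assert (E : 0 + g * 1 = g) by ring. rewrite E in H. exact H. Qed.

Lemma deriv_rprod n (be ga : nat -> R) : (forall i, (i < n)%nat -> be i <> 0) ->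
  derivable_pt_lim (fun t => rprod n (fun i => be i + ga i * t)) 0 (rprod n be * rsum n (fun i => ga i / be i)).
Proof. induction n; intros H.
- simpl. replace (1 * 0) with 0 by ring. apply derivable_pt_lim_const.
- assert (IH := IHn (fun i Hi => H i ltac:(lia))).
  assert (HM := derivable_pt_lim_mult _ _ 0 _ _ IH (deriv_lin (be n) (ga n))).
  assert (Hn : be n <> 0) by (apply H; lia).
  assert (E : rprod n (fun i => be i + ga i * 0) = rprod n be) by (apply rprod_ext; intros; ring).
  match type of HM with derivable_pt_lim _ _ ?L => replace (rprod (S n) be * rsum (S n) (fun i => ga i / be i)) with L end.
  exact HM. rewrite E. simpl. field. auto.
Qed.

Lemma deriv_quot n Q (be ga : nat -> R) : (forall i, (i < n)%nat -> 0 < be i) ->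
  derivable_pt_lim (fun t => Q / rprod n (fun i => be i + ga i * t)) 0
    (- Q / rprod n be * rsum n (fun i => ga i / be i)).
Proof. intros H.
assert (Hne : forall i, (i < n)%nat -> be i <> 0) by (intros i Hi; specialize (H i Hi); lra).
assert (HP := deriv_rprod n be ga Hne).
assert (E : rprod n (fun i => be i + ga i * 0) = rprod n be) by (apply rprod_ext; intros; ring).
assert (Hp : 0 < rprod n be) by (apply rprod_pos; auto).
assert (HD := derivable_pt_lim_div (fct_cte Q) (fun t => rprod n (fun i => be i + ga i * t)) 0 0 _
   (derivable_pt_lim_const Q 0) HP ltac:(cbv beta; rewrite E; lra)).
match type of HD with derivable_pt_lim _ _ ?L => replace (- Q / rprod n be * rsum n (fun i => ga i / be i)) with L end.
exact HD. unfold fct_cte. cbv beta. rewrite E. unfold Rsqr. field. lra.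
Qed.

Lemma min_pos n (be : nat -> R) : (forall i, (i < n)%nat -> 0 < be i) ->
  exists mm, 0 < mm /\ forall i, (i < n)%nat -> mm <= be i.
Proof. induction n; intros H. exists 1; split; [lra|intros; lia].
destruct (IHn (fun i Hi => H i ltac:(lia))) as [mm [H1 H2]].
exists (Rmin mm (be n)). split. apply Rmin_pos; [auto|apply H; lia].
intros i Hi. destruct (Nat.eq_dec i n). subst. apply Rmin_r.
eapply Rle_trans. apply Rmin_l. apply H2; lia. Qed.

Lemma deriv_volfun n v Q : lin_indep n v ->
  (forall w, (forall i, (i < n)%nat -> 0 < coef n v w i) -> volfun n v w = Q / rprod n (coef n v w)) ->
  forall w0 h, (forall i, (i < n)%nat -> 0 < coef n v w0 i) ->
  derivable_pt_lim (fun t => volfun n v (fun j => w0 j + t * h j)) 0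
    (- Q / rprod n (coef n v w0) * rsum n (fun i => coef n v h i / coef n v w0 i)).
Proof. intros Hli HQ w0 h Hb.
apply deriv_local with (fun t => Q / rprod n (fun i => coef n v w0 i + coef n v h i * t)).
apply deriv_quot; auto.
destruct (min_pos n _ Hb) as [mm [Hmm Hmi]].
set (G := rsum n (fun i => Rabs (coef n v h i)) + 1).
assert (HG : 0 < G) by (unfold G; assert (0 <= rsum n (fun i => Rabs (coef n v h i))) by (apply rsum_nonneg; intros; apply Rabs_pos); lra).
exists (mm / G). split. apply Rdiv_lt_0_compat; auto.
intros t Ht. rewrite Rminus_0_r in Ht.
assert (Hc : forall i, coef n v (fun j => w0 j + t * h j) i = coef n v w0 i + coef n v h i * t).
{ intros i. rewrite (coef_ext n v _ (fun j => 1 * w0 j + t * h j)) by (intros; ring).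
  rewrite coef_lin. ring. }
assert (Hpos : forall i, (i < n)%nat -> 0 < coef n v w0 i + coef n v h i * t).
{ intros i Hi. assert (Rabs (coef n v h i) <= G - 1) by
    (unfold G; ring_simplify; apply (rsum_term n (fun i => Rabs (coef n v h i))); auto; intros; apply Rabs_pos).
  assert (Rabs (coef n v h i * t) < mm).
  { rewrite Rabs_mult. assert (0 <= Rabs t) by apply Rabs_pos.
    apply Rle_lt_trans with (G * Rabs t). apply Rmult_le_compat_r; lra.
    assert (Rabs t * G < mm / G * G) by (apply Rmult_lt_compat_r; auto).
    unfold Rdiv in H1. rewrite Rmult_assoc, Rinv_l, Rmult_1_r in H1 by lra. lra. }
  assert (mm <= coef n v w0 i) by auto.
  assert (- Rabs (coef n v h i * t) <= coef n v h i * t) by (assert (HH := Rle_abs (- (coef n v h i * t))); rewrite Rabs_Ropp in HH; lra).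
  lra. }
rewrite HQ. f_equal. apply rprod_ext; intros; auto.
intros i Hi. rewrite Hc; auto.
Qed.


Lemma dot_canon n v u w : lin_indep n v -> canonical_weight n v u -> dot n u w = rsum n (coef n v w).
Proof. intros Hli Hc. rewrite (dot_decomp n v Hli). apply rsum_ext. intros i Hi. rewrite Hc; auto; ring. Qed.

Lemma coef_scale n v xi s i : coef n v (fun j => xi j / s) i = coef n v xi i / s.
Proof. rewrite (coef_ext n v _ (fun j => / s * xi j + 0 * xi j)) by (intros; unfold Rdiv; ring).
rewrite coef_lin. unfold Rdiv; ring. Qed.

Theorem mainTheorem5 (n : nat) (v : nat -> nat -> Z) (xi : nat -> R) :
  (1 <= n)%nat ->
  (forall i, (i < n)%nat -> primitive_vec n (v i)) ->
  lin_indep n v ->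
  in_interior_sigma n v xi ->
  (Kstable n v xi <->
     exists c : R, (0 < c)%R /\
       forall j, (j < n)%nat -> xi j = c * rsum n (fun i => IZR (v i j)))
  /\ (Kstable n v xi -> quasi_regular n xi).
Proof.
intros Hn _ Hli Hint.
assert (Hx : forall i, (i < n)%nat -> 0 < coef n v xi i) by (apply interior_pos; auto).
set (sg := rsum n (coef n v xi)).
assert (Hsg : 0 < sg).
{ unfold sg. apply Rlt_le_trans with (coef n v xi 0). apply Hx; lia.
  apply rsum_term. lia. intros; left; apply Hx; auto. }
destruct (vol_formula n v Hli) as [Q [HQ HQf]].
assert (Hw0 : forall u, canonical_weight n v u ->
  forall i, (i < n)%nat -> coef n v (fun j => xi j / dot n u xi) i = coef n v xi i / sg).
{ intros u Hu i Hi. rewrite coef_scale. rewrite (dot_canon n v u xi Hli Hu). auto. }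
assert (Fwd : Kstable n v xi -> exists c : R, 0 < c /\
       forall j, (j < n)%nat -> xi j = c * rsum n (fun i => IZR (v i j))).
{ intros [u [Hu [Hdot Hcrit]]].
  set (w0 := fun j => xi j / dot n u xi).
  assert (Hb0 : forall i, (i < n)%nat -> 0 < coef n v w0 i).
  { intros i Hi. unfold w0. rewrite Hw0 by auto. apply Rdiv_lt_0_compat; auto. }
  assert (Heq : forall i i', (i < n)%nat -> (i' < n)%nat -> coef n v w0 i = coef n v w0 i').
  { intros i i' Hi Hi'.
    set (h := fun j => IZR (v i j) - IZR (v i' j)).
    assert (Hh : dot n u h = 0).
    { unfold dot, h. rewrite (rsum_ext _ _ (fun j => u j * zvec (v i) j + - (u j * zvec (v i') j))).
      rewrite rsum_plus, rsum_opp. fold (dot n u (zvec (v i))). fold (dot n u (zvec (v i'))).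
      rewrite !Hu by auto. ring. intros; unfold zvec; ring. }
    assert (D1 := Hcrit h Hh).
    assert (D2 := deriv_volfun n v Q Hli HQf w0 h Hb0).
    assert (E := uniqueness_limite _ _ _ _ D2 D1).
    assert (Hg : forall k, (k < n)%nat -> coef n v h k = (if Nat.eqb k i then 1 else 0) - (if Nat.eqb k i' then 1 else 0)).
    { apply (coef_uniq n v Hli h). intros j Hj. unfold h.
      rewrite (rsum_ext _ _ (fun k => (if Nat.eqb k i then 1 else 0) * IZR (v k j) + - ((if Nat.eqb k i' then 1 else 0) * IZR (v k j)))) by (intros; ring).
      rewrite rsum_plus, rsum_opp, !rsum_delta by auto. ring. }
    assert (Hs : rsum n (fun k => coef n v h k / coef n v w0 k) = / coef n v w0 i - / coef n v w0 i').
    { rewrite (rsum_ext _ _ (fun k => (if Nat.eqb k i then 1 else 0) * / coef n v w0 k + - ((if Nat.eqb k i' then 1 else 0) * / coef n v w0 k))).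
      rewrite rsum_plus, rsum_opp, !rsum_delta by auto. ring.
      intros k Hk. rewrite Hg by auto. unfold Rdiv. ring. }
    rewrite Hs in E.
    assert (HP : 0 < rprod n (coef n v w0)) by (apply rprod_pos; auto).
    assert (Hqp : 0 < Q / rprod n (coef n v w0)) by (apply Rdiv_lt_0_compat; auto).
    assert (Hz : / coef n v w0 i - / coef n v w0 i' = 0).
    { assert (Q / rprod n (coef n v w0) * (/ coef n v w0 i - / coef n v w0 i') = 0).
      { replace (Q / rprod n (coef n v w0) * (/ coef n v w0 i - / coef n v w0 i')) with
          (- (- Q / rprod n (coef n v w0) * (/ coef n v w0 i - / coef n v w0 i'))) by (unfold Rdiv; ring).
        rewrite E. ring. }
      apply Rmult_integral in H. destruct H; [lra|auto]. }
    assert (Hb1 := Hb0 i Hi). assert (Hb2 := Hb0 i' Hi').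
    rewrite <- (Rinv_inv (coef n v w0 i)), <- (Rinv_inv (coef n v w0 i')). f_equal. lra. }
  exists (coef n v xi 0%nat). split. apply Hx; lia.
  intros j Hj. rewrite (coef_repr n v Hli xi j Hj), <- rsum_scal. apply rsum_ext. intros i Hi.
  f_equal. assert (E := Heq i 0%nat Hi ltac:(lia)). unfold w0 in E. rewrite !Hw0 in E by (auto; lia).
  unfold Rdiv in E. apply Rmult_eq_reg_r in E; auto. apply Rgt_not_eq, Rinv_0_lt_compat; auto. }
split; [split|].
- exact Fwd.
- intros [c [Hc Hxi]].
  destruct (LA2' n v Hli) as [u Hu].
  assert (Hcx : forall i, (i < n)%nat -> coef n v xi i = c).
  { apply (coef_uniq n v Hli xi (fun _ => c)). intros j Hj. rewrite Hxi, <- rsum_scal by auto. auto. }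
  exists u. split; [exact Hu|]. split.
  + assert (Hd : dot n u xi = sg) by (apply dot_canon; auto).
    set (d := dot n u xi) in *. unfold dot at 1.
    rewrite (rsum_ext _ _ (fun j => / d * (u j * xi j))) by (intros; unfold Rdiv; ring).
    rewrite rsum_scal. fold (dot n u xi). fold d. rewrite Hd. field. lra.
  + intros h Hh.
    set (w0 := fun j => xi j / dot n u xi).
    assert (Hb0 : forall i, (i < n)%nat -> coef n v w0 i = c / sg).
    { intros i Hi. unfold w0. rewrite Hw0 by auto. rewrite Hcx; auto. }
    assert (Hb0' : forall i, (i < n)%nat -> 0 < coef n v w0 i).
    { intros i Hi. rewrite Hb0 by auto. apply Rdiv_lt_0_compat; auto. }
    assert (D2 := deriv_volfun n v Q Hli HQf w0 h Hb0').
    assert (Hsum : rsum n (fun i => coef n v h i / coef n v w0 i) = 0).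
    { rewrite (rsum_ext _ _ (fun i => / (c / sg) * coef n v h i)).
      rewrite rsum_scal. rewrite (dot_canon n v u h Hli Hu) in Hh. rewrite Hh. ring.
      intros i Hi. rewrite Hb0 by auto. unfold Rdiv at 1. ring. }
    rewrite Hsum, Rmult_0_r in D2. exact D2.
- intros HK. destruct (Fwd HK) as [c [Hc Hxi]]. exists c. split; auto.
  exists (fun j => inject_Z (zsum n (fun i => v i j))). intros j Hj.
  rewrite Hxi by auto. f_equal. unfold Q2R. simpl. rewrite zsum_IZR. field.
Qed.
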